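(* Let $n\ge1$, $k\ge2$, $\gamma=((i_1\,j_1),\dots,(i_k\,j_k))\in\Sigma_n(k)$ and $l\in\{1,\dots,k-1\}$. Then $\sigma_l\cdot\gamma\in\Sigma_n(k)$ and $P(\sigma_l\cdot\gamma)=\sigma_l\cdot P(\gamma)$. Moreover, writing $\sigma_l\cdot\gamma=((i_{\sigma_l^{-1}(1)}\,\tilde j_1),\dots,(i_{\sigma_l^{-1}(k)}\,\tilde j_k))$, one has $\bigcup_{s=1}^k\{i_s,j_s\}=\bigcup_{s=1}^k\{i_s,\tilde j_s\}$.
   Context: Let $n\ge1$. $\mathfrak S_n$ is the symmetric group on $\{1,\dots,n\}$; products are composed right to left. $\mathsf T_n$ is the set of transpositions; a transposition is always written $(i\,j)$ with $i<j$. For $\sigma\in\mathfrak S_n$, $|\sigma|=n-(\text{number of cycles of }\sigma\text{, fixed points counted})$; $\sigma_1\preccurlyeq\sigma_2$ iff $|\sigma_2|=|\sigma_1|+|\sigma_1^{-1}\sigma_2|$. $\Sigma_n(k)=\{(\tau_1,\dots,\tau_k)\in(\mathsf T_n)^k : |\tau_1\cdots\tau_k|=k,\ \tau_1\cdots\tau_k\preccurlyeq(1\,2\,\dots\,n)\}$. $P:\Sigma_n(k)\to\{1,\dots,n-1\}^k$ sends $((i_1\,j_1),\dots,(i_k\,j_k))$ to $(i_1,\dots,i_k)$. The group $\mathfrak S_k$ acts on sequences by $\pi\cdot(x_1,\dots,x_k)=(x_{\pi^{-1}(1)},\dots,x_{\pi^{-1}(k)})$. Let $\sigma_l=(l\;l+1)\in\mathfrak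 S_k$. For $(g_1,\dots,g_k)\in(\mathsf T_n)^k$ define $\beta_l\cdot(g_1,\dots,g_k)=(g_1,\dots,g_{l-1},g_{l+1},g_{l+1}^{-1}g_lg_{l+1},g_{l+2},\dots,g_k)$ and $\beta_l^{-1}\cdot(g_1,\dots,g_k)=(g_1,\dots,g_{l-1},g_lg_{l+1}g_l^{-1},g_l,g_{l+2},\dots,g_k)$. For $\gamma=((i_1\,j_1),\dots,(i_k\,j_k))\in\Sigma_n(k)$ define $\sigma_l\cdot\gamma=\gamma$ if $i_l=i_{l+1}$, $\sigma_l\cdot\gamma=\beta_l\cdot\gamma$ if $i_l<i_{l+1}$, and $\sigma_l\cdot\gamma=\beta_l^{-1}\cdot\gamma$ if $i_l>i_{l+1}$. *)

(* Defs.v *)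
(* Points {1..n} are encoded 0-based as 'I_n. *)
From HB Require Import structures.
From mathcomp Require Import all_boot all_order all_fingroup.
Set Implicit Arguments. Unset Strict Implicit. Unset Printing Implicit Defensive.

Local Open Scope group_scope.

(* Paper product tau_1 ... tau_k, composed right to left:
   (tau_1 ... tau_k)(x) = tau_1(... tau_k(x)).  In MathComp, (s * t) x = t (s x),
   so the paper product is tau_k * ... * tau_1. *)
Fixpoint pprod n (s : seq {perm 'I_n}) : {perm 'I_n} :=
  if s is t :: s' then pprod s' * t else 1.

(* paper composition  a b  (apply b first, then a) *)
Definition pcomp n (a b : {perm 'I_n}) : {perm 'I_n} := b * a.

(* |sigma| = n - number of cycles (fixed points counted) *)
Definition plen n (s : {perm 'I_n}) : nat := n - #|porbits s|.

Definition pleq n (s1 s2 : {perm 'I_n}) : Prop :=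
  plen s2 = plen s1 + plen (pcomp s1^-1 s2).

(* the long cycle (1 2 ... n): i |-> i+1 mod n (0-based) *)
Definition longcycle n : {perm 'I_n} := perm (@ordS_inj n).

Definition is_transp n (t : {perm 'I_n}) : bool :=
  [exists i : 'I_n, exists j : 'I_n, (i < j)%N && (t == tperm i j)].

Definition Sigma n k (g : seq {perm 'I_n}) : Prop :=
  [/\ size g = k, all (@is_transp n) g, plen (pprod g) = k
    & pleq (pprod g) (longcycle n)].

(* for a transposition (i j), i < j : tmin = i, tmax = j (as naturals) *)
Definition tmin n (t : {perm 'I_n}) : nat :=
  head 0%N [seq val x | x <- enum 'I_n & t x != x].
Definition tmax n (t : {perm 'I_n}) : nat :=
  last 0%N [seq val x | x <- enum 'I_n & t x != x].

Definition P n (g : seq {perm 'I_n}) : seq nat := [seq tmin t | t <- g].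

Definition sact T (x0 : T) k (pi : {perm 'I_k}) (s : seq T) : seq T :=
  [seq nth x0 s (pi^-1 i) | i <- enum 'I_k].

(* braid generators beta_l, beta_l^{-1} (l 0-based: acts on positions l, l+1) *)
Definition beta n (l : nat) (g : seq {perm 'I_n}) : seq {perm 'I_n} :=
  let gl := nth 1 g l in let gl1 := nth 1 g l.+1 in
  take l g ++ [:: gl1; pcomp (pcomp gl1^-1 gl) gl1] ++ drop l.+2 g.
Definition betainv n (l : nat) (g : seq {perm 'I_n}) : seq {perm 'I_n} :=
  let gl := nth 1 g l in let gl1 := nth 1 g l.+1 in
  take l g ++ [:: pcomp (pcomp gl gl1) gl^-1; gl] ++ drop l.+2 g.

Definition sigact n (l : nat) (g : seq {perm 'I_n}) : seq {perm 'I_n} :=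
  let il := tmin (nth 1 g l) in let il1 := tmin (nth 1 g l.+1) in
  if il == il1 then g else if (il < il1)%N then beta l g else betainv l g.

(* the set  U_s {i_s, j_s}  as a membership predicate on nat *)
Definition tsupp n (g : seq {perm 'I_n}) : seq nat :=
  flatten [seq [:: tmin t; tmax t] | t <- g].

(* Main.v *)
Require Import Defs.
From mathcomp Require Import all_boot all_order all_fingroup.
From mathcomp Require Import zify.
Set Implicit Arguments. Unset Strict Implicit. Unset Printing Implicit Defensive.

Section Helpers.
Variable n : nat.

Lemma tperm_supp (u v x : 'I_n) : u != v -> (tperm u v x != x) = (x == u) || (x == v).
Proof.
move=> uv; case: tpermP.
- by move=> ->; rewrite eqxx eq_sym uv.
- by move=> ->; rewrite eqxx orbT.
- by move=> /eqP xu /eqP xv; rewrite (negbTE xu) (negbTE xv) eqxx.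
Qed.

Lemma mem_supp (u v : 'I_n) x : u != v ->
  (x \in [seq val y | y <- enum 'I_n & tperm u v y != y]) = (x == val u) || (x == val v).
Proof.
move=> uv; apply/mapP/idP.
- case=> y; rewrite mem_filter tperm_supp // => /andP [/orP [] /eqP -> _] ->;
  by rewrite eqxx ?orbT.
- case/orP=> /eqP ->; [exists u | exists v] => //;
  by rewrite mem_filter tperm_supp // ?eqxx ?orbT mem_enum.
Qed.

Lemma sorted_supp (p : pred 'I_n) : sorted ltn [seq val y | y <- enum 'I_n & p y].
Proof.
apply: (@subseq_sorted _ _ ltn_trans _ [seq val y | y <- enum 'I_n]).
  by apply: map_subseq; apply: filter_subseq.
by rewrite val_enum_ord iota_ltn_sorted.
Qed.

Lemma supp_tperm (u v : 'I_n) : val u < val v ->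
  [seq val y | y <- enum 'I_n & tperm u v y != y] = [:: val u; val v].
Proof.
move=> uv; have uv' : u != v by rewrite -(inj_eq val_inj) neq_ltn uv.
apply: (irr_sorted_eq ltn_trans ltnn (sorted_supp _)); first by rewrite /= andbT.
by move=> x; rewrite mem_supp // !inE.
Qed.

Lemma tmin_tperm (u v : 'I_n) : u != v -> tmin (tperm u v) = minn u v.
Proof.
move=> uv; rewrite /tmin; case: (ltngtP u v) => h.
- by rewrite supp_tperm //= (minn_idPl (ltnW h)).
- by rewrite tpermC supp_tperm //= (minn_idPr (ltnW h)).
- by move: uv; rewrite (val_inj h) eqxx.
Qed.

Lemma tmax_tperm (u v : 'I_n) : u != v -> tmax (tperm u v) = maxn u v.
Proof.
move=> uv; rewrite /tmax; case: (ltngtP u v) => h.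
- by rewrite supp_tperm //= (maxn_idPr (ltnW h)).
- by rewrite tpermC supp_tperm //= (maxn_idPl (ltnW h)).
- by move: uv; rewrite (val_inj h) eqxx.
Qed.

Lemma transpP (t : {perm 'I_n}) : is_transp t -> exists u v : 'I_n, (u < v)%N /\ t = tperm u v.
Proof. by case/existsP=> u /existsP [v /andP [h /eqP ->]]; exists u, v. Qed.

Lemma is_transp_tperm (u v : 'I_n) : u != v -> is_transp (tperm u v).
Proof.
move=> uv; apply/existsP; case: (ltngtP u v) => h.
- by exists u; apply/existsP; exists v; rewrite h eqxx.
- by exists v; apply/existsP; exists u; rewrite h tpermC eqxx.
- by move: uv; rewrite (val_inj h) eqxx.
Qed.

Lemma pprod_cat (a b : seq {perm 'I_n}) : Defs.pprod (cat a b) = (Defs.pprod b * Defs.pprod a)%g.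
Proof. by elim: a => [|x a IH] /=; rewrite ?mulg1 // IH mulgA. Qed.

Lemma tsupp_cat (a b : seq {perm 'I_n}) : tsupp (a ++ b) = tsupp a ++ tsupp b.
Proof. by rewrite /tsupp map_cat flatten_cat. Qed.

End Helpers.

Lemma nth_swap T (x0 : T) pre a b post i : i != size pre -> i != (size pre).+1 ->
  nth x0 (pre ++ a :: b :: post) i = nth x0 (pre ++ b :: a :: post) i.
Proof.
move=> h1 h2; rewrite !nth_cat; case: ifP => // /negbT; rewrite -leqNgt => h.
case e: (i - size pre) => [|[|m]] //=; lia.
Qed.

Lemma sact_swap T (x0 : T) k (l : 'I_k) (hl : l.+1 < k) pre a b post :
  size pre = l -> size (pre ++ a :: b :: post) = k ->
  sact x0 (tperm l (Ordinal hl)) (pre ++ a :: b :: post) = pre ++ b :: a :: post.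
Proof.
move=> hp hs; apply: (eq_from_nth (x0 := x0)).
  by rewrite size_map size_enum_ord -hs !size_cat.
move=> i; rewrite size_map size_enum_ord => ik.
rewrite (nth_map l) ?size_enum_ord // tpermV.
have ej := nth_enum_ord l ik; set j := nth l (enum 'I_k) i in ej *.
case: tpermP => [ejl|ejl|/eqP njl /eqP njl'].
  rewrite /= !nth_cat hp -ej ejl ltnn subnn /=.
  by rewrite ltnNge leqnSn /= subSnn.
- rewrite /= !nth_cat hp ltnn subnn -ej ejl /= ltnNge leqnSn /= subSnn //.
- rewrite ej nth_swap // -?ej hp.
  + by apply: contra njl => /eqP e; apply/eqP/val_inj.
  + by apply: contra njl' => /eqP e; apply/eqP/val_inj.
Qed.

Lemma minmax_mem (z p q : nat) : (z == minn p q) || (z == maxn p q) = (z == p) || (z == q).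
Proof.
case: (leqP p q) => h.
- by [].
- by rewrite orbC.
Qed.

Lemma finish n k (l : 'I_k) (hl : l.+1 < k) (pre post : seq {perm 'I_n}) (x y x' y' : {perm 'I_n}) :
  size pre = l -> Sigma k (pre ++ x :: y :: post) -> is_transp x' -> is_transp y' ->
  (y' * x' = y * x)%g -> tmin x' = tmin y -> tmin y' = tmin x ->
  (forall z, (z \in [:: tmin x; tmax x; tmin y; tmax y]) =
             (z \in [:: tmin x'; tmax x'; tmin y'; tmax y'])) ->
  [/\ Sigma k (pre ++ x' :: y' :: post),
      P (pre ++ x' :: y' :: post) = sact 0%N (tperm l (Ordinal hl)) (P (pre ++ x :: y :: post))
    & forall z : nat, (z \in tsupp (pre ++ x :: y :: post)) = (z \in tsupp (pre ++ x' :: y' :: post))].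
Proof.
move=> hp [sz allt len le] tx' ty' eprod e1 e2 emem.
have epp : Defs.pprod (pre ++ x' :: y' :: post) = Defs.pprod (pre ++ x :: y :: post).
  by rewrite !pprod_cat /= -!mulgA (mulgA y) (mulgA y') eprod.
split.
- split; rewrite ?epp //.
  + by rewrite -sz !size_cat.
  + by move: allt; rewrite !all_cat /= tx' ty' => /andP [-> /and3P [_ _ ->]].
- rewrite /P !map_cat /= sact_swap ?size_map ?e1 ?e2 //.
  by rewrite size_cat /= !size_map -sz size_cat.
- move=> z.
  have E (a b : {perm 'I_n}) r : tsupp [:: a, b & r] = [:: tmin a; tmax a; tmin b; tmax b] ++ tsupp r by [].
  by rewrite !tsupp_cat !E !mem_cat emem.
Qed.

Theorem lemma4p1 (n k : nat) (g : seq {perm 'I_n}) (l : 'I_k) (hl : (l.+1 < k)%N) :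
  (1 <= n)%N -> (2 <= k)%N -> Sigma k g ->
  let sl : {perm 'I_k} := tperm l (Ordinal hl) in
  [/\ Sigma k (sigact l g),
      P (sigact l g) = sact 0%N sl (P g)
    & forall x : nat, (x \in tsupp g) = (x \in tsupp (sigact l g))].
Proof.
move=> n1 k2 Sg sl; rewrite /sl; clear sl.
have [sz allt _ _] := Sg.
have hlg : l.+1 < size g by rewrite sz.
have tx := all_nthP 1%g allt l (ltn_trans (ltnSn l) hlg).
have ty := all_nthP 1%g allt l.+1 hlg.
have [u [v [uv ex]]] := transpP tx.
have [c [d [cd ey]]] := transpP ty.
set pre := take l g; set post := drop l.+2 g.
have hp : size pre = l by rewrite size_take (ltn_trans (ltnSn l) hlg).
have eg : g = pre ++ tperm u v :: tperm c d :: post.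
  rewrite -ex -ey; apply: (eq_from_nth (x0:=1%g)).
    by rewrite size_cat /= /post size_drop hp !addnS -!addSn subnKC.
  move=> i _; rewrite nth_cat hp; case: ltnP => h; first by rewrite /pre nth_take.
  case e: (i - l) => [|[|m]] /=.
  - by have -> : i = l by lia.
  - by have -> : i = l.+1 by lia.
  - rewrite /post nth_drop; congr nth; lia.
clearbody pre post; subst g; clear tx ty ex ey allt sz.
set X := tperm u v; set Y := tperm c d.
have nl : nth 1%g (pre ++ X :: Y :: post) l = X by rewrite nth_cat hp ltnn subnn.
have nl1 : nth 1%g (pre ++ X :: Y :: post) l.+1 = Y
  by rewrite nth_cat hp ltnNge leqnSn /= subSnn.
have tk : take l (pre ++ X :: Y :: post) = pre by rewrite take_size_cat.
have dr : drop l.+2 (pre ++ X :: Y :: post) = post.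
  rewrite drop_cat hp; case: ifP => h; first lia.
  by rewrite (_ : forall m : nat, m.+2 - m = 2) /= ?drop0 // => m; rewrite -addn2 addKn.
have uv' : u != v by rewrite -(inj_eq val_inj) neq_ltn uv.
have cd' : c != d by rewrite -(inj_eq val_inj) neq_ltn cd.
have tX : tmin X = u by rewrite tmin_tperm // (minn_idPl (ltnW uv)).
have tY : tmin Y = c by rewrite tmin_tperm // (minn_idPl (ltnW cd)).
have mX : tmax X = v by rewrite tmax_tperm // (maxn_idPr (ltnW uv)).
have mY : tmax Y = d by rewrite tmax_tperm // (maxn_idPr (ltnW cd)).
rewrite /sigact /beta /betainv nl nl1 tk dr tX tY.
case: ifP => [/eqP euc|/negbT nuc].
  apply: finish => //; try by rewrite ?tX ?tY ?euc.
  - exact: is_transp_tperm uv'.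
  - exact: is_transp_tperm cd'.
case: ltnP => uc.
-
  set t := tperm c d.
  have ey' : Defs.pcomp (Defs.pcomp (Y^-1)%g X) Y = tperm (t u) (t v)
    by rewrite -tpermJ conjgE /Defs.pcomp !tpermV.
  have tuv : t u != t v by rewrite (inj_eq perm_inj).
  apply: finish => //.
  + exact: is_transp_tperm.
  + by rewrite ey'; exact: is_transp_tperm.
  + by rewrite /Defs.pcomp -!mulgA mulVg mulg1.
  + rewrite ey' tmin_tperm // tX.
    rewrite /t; case: tpermP => [e|e|_ _]; first (by move: uc; rewrite e ltnn);
      first (by move: uc cd; rewrite e; lia).
    by case: tpermP => [e|e|_ _]; apply/minn_idPl; lia.
  + move=> z; rewrite !inE tX tY mX mY ey' tmin_tperm // tmax_tperm //.
    rewrite minmax_mem /t.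
    by case: (tpermP c d u) => [->|->|_ _]; case: (tpermP c d v) => [->|->|_ _];
      by case: (z == u); case: (z == v); case: (z == c); case: (z == d).
-
  have uc' : c < u by lia.
  set t := tperm u v.
  have ex' : Defs.pcomp (Defs.pcomp X Y) (X^-1)%g = tperm (t c) (t d)
    by rewrite -tpermJ conjgE /Defs.pcomp.
  have tcd : t c != t d by rewrite (inj_eq perm_inj).
  apply: finish => //.
  + by rewrite ex'; exact: is_transp_tperm.
  + exact: is_transp_tperm uv'.
  + by rewrite /Defs.pcomp mulKVg.
  + rewrite ex' tmin_tperm // tY.
    rewrite /t; case: tpermP => [e|e|_ _]; first (by move: uc'; rewrite e ltnn);
      first (by move: uc' uv; rewrite e; lia).
    by case: tpermP => [e|e|_ _]; apply/minn_idPl; lia.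
  + move=> z; rewrite !inE tX tY mX mY ex' tmin_tperm // tmax_tperm //.
    rewrite [X in _ = X]orbA minmax_mem /t.
    by case: (tpermP u v c) => [->|->|_ _]; case: (tpermP u v d) => [->|->|_ _];
      by case: (z == u); case: (z == v); case: (z == c); case: (z == d).
Qed.
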